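(* Let $P(z,\bar z)=\sum_{j+k\leq n}\alpha_{j,k} z^j\bar z^k$ be an irreducible polyanalytic polynomial such that $|\alpha_{j,k}|\neq|\alpha_{k,j}|$ for some indices $j,k$. Then $P$ has only finitely many zeros in $\mathbb{C}$.
   Context: A polyanalytic polynomial is a function $\mathbb{C}\to\mathbb{C}$ of the form $P(z,\bar z)=\sum_{j+k\le n}\alpha_{j,k} z^j \bar z^{k}$ with complex coefficients (a polynomial in $z$ and $\bar z$); two such polynomials are equal iff all coefficients agree. Its degree is the largest $j+k$ with $\alpha_{j,k}\neq 0$. $P$ is called reducible if $P=P_1P_2$ for polyanalytic polynomials $P_1,P_2$ with $\deg(P_1),\deg(P_2)\geq 1$, and irreducible otherwise. A zero of $P$ is a point $z\in\mathbb{C}$ with $P(z,\bar z)=0$. *)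

(* Defs.v *)
From HB Require Import structures.
From mathcomp Require Import all_boot all_order all_algebra.
From mathcomp Require Import reals complex.
Set Implicit Arguments. Unset Strict Implicit. Unset Printing Implicit Defensive.
Import Order.TTheory GRing.Theory Num.Theory.
Local Open Scope ring_scope.

(* A polyanalytic polynomial P(z, zbar) = sum alpha_{j,k} z^j zbar^k is
   represented as p : {poly {poly C}}, with alpha_{j,k} = p`_j`_k
   (outer variable <-> z, inner variable <-> zbar). *)
Definition polyan (R : realType) := {poly {poly R[i]}}.

Definition coefan (R : realType) (p : polyan R) (j k : nat) : R[i] := p`_j`_k.

Definition degan (R : realType) (p : polyan R) : nat :=
  (\max_(j < size p) \max_(k < size (p`_j)%R)
     (if coefan p j k != 0%R then j + k else 0))%N.

Definition evalan (R : realType) (p : polyan R) (z : R[i]) : R[i] :=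
  \sum_(j < size p) \sum_(k < size p`_j) coefan p j k * z ^+ j * (z^*) ^+ k.

Definition reducible_an (R : realType) (p : polyan R) : Prop :=
  exists p1 p2 : polyan R,
    p = p1 * p2 /\ (1 <= degan p1)%N /\ (1 <= degan p2)%N.

Definition irreducible_an (R : realType) (p : polyan R) : Prop :=
  ~ reducible_an p.

(* Main.v *)
Require Import Defs.
From HB Require Import structures.
From mathcomp Require Import all_boot all_order all_algebra.
From mathcomp Require Import reals complex ring.
Import Order.TTheory GRing.Theory Num.Theory.
Set Implicit Arguments. Unset Strict Implicit.
Local Open Scope ring_scope.
Local Notation "x %:F" := (@FracField.tofrac _ x).

Lemma fracP (A : idomainType) (x : {fraction A}) :
  exists n d : A, d != 0 /\ x * d%:F = n%:F.
Proof.
elim/quotW: x => x.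
exists (x.1), (x.2); split; first exact: denom_ratioP.
rewrite !piE.
apply/eqmodP => /=. rewrite FracField.equivfE /FracField.mulf /=.
rewrite !numden_Ratio ?mulf_neq0 ?oner_eq0 ?denom_ratioP //.
by rewrite !mulr1 mulrC.
Qed.

Lemma tofrac_inj (A : idomainType) : injective (@FracField.tofrac A).
Proof. by move=> x y /eqP; rewrite tofrac_eq => /eqP. Qed.

Lemma clear_den (A : idomainType) (T : {poly {fraction A}}) :
  exists d : A, d != 0 /\ exists t : {poly A},
    map_poly (@FracField.tofrac A) t = (d%:F)%:P * T.
Proof.
elim/poly_ind: T => [|T c [d [dn0 [t ht]]]].
  by exists 1; split; [exact: oner_neq0| exists 0; rewrite rmorph0 mulr0].
have [n [e [en0 hce]]] := fracP c.
exists (d * e); split; first by rewrite mulf_neq0.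
exists (e%:P * t * 'X + (d * n)%:P).
rewrite rmorphD !rmorphM /= map_polyX !map_polyC /= ht -hce !rmorphM /=.
ring.
Qed.

Section Deg.
Variable R : realType.
Local Notation C := R[i].
Local Notation A := {poly C}.

Lemma degan_ge (f : polyan R) j k : f`_j`_k != 0 -> (j + k <= degan f)%N.
Proof.
move=> hne.
have hj : (j < size f)%N.
  rewrite ltnNge; apply/negP => /leq_sizeP /(_ j (leqnn _)) h.
  by move: hne; rewrite h coef0 eqxx.
have hk : (k < size (f`_j)%R)%N.
  rewrite ltnNge; apply/negP => /leq_sizeP /(_ k (leqnn _)) h.
  by move: hne; rewrite h eqxx.
rewrite /degan.
apply: (leq_trans _ (leq_bigmax (Ordinal hj))) => /=.
apply: (leq_trans _ (leq_bigmax (Ordinal hk))) => /=.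
by rewrite /coefan hne.
Qed.

Lemma degan0 (f : polyan R) : degan f = 0%N -> f = (f`_0`_0)%:P%:P.
Proof.
move=> h0; apply/polyP => j; apply/polyP => k.
case: (eqVneq f`_j`_k 0) => [hz|hne].
  rewrite hz coefC; case: j hz => [|j] hz /=; rewrite ?coef0 // coefC.
  by case: k hz => [|k] hz //=; rewrite hz.
have := degan_ge hne; rewrite h0 leqn0 addn_eq0 => /andP[/eqP hj /eqP hk].
by subst j k; rewrite !coefC.
Qed.

Lemma degan_pos (f : polyan R) : (1 < size f)%N -> (1 <= degan f)%N.
Proof.
move=> hs.
have hf : f != 0 by rewrite -size_poly_eq0 -lt0n (ltn_trans _ hs).
have hl : lead_coef f != 0 by rewrite lead_coef_eq0.
have hll : lead_coef (lead_coef f) != 0 by rewrite lead_coef_eq0.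
apply: leq_trans (degan_ge hll).
by rewrite /lead_coef; case: (size f) hs => [|[|n]].
Qed.

Lemma degan_posC (c : A) : (1 < size c)%N -> (1 <= degan (c%:P : polyan R))%N.
Proof.
move=> hs.
have hc : c != 0 by rewrite -size_poly_eq0 -lt0n (ltn_trans _ hs).
have hl : (c%:P : polyan R)`_0`_(size c).-1 != 0.
  by rewrite coefC /= -/(lead_coef c) lead_coef_eq0.
apply: leq_trans (degan_ge hl).
by rewrite add0n; case: (size c) hs => [|[|n]].
Qed.

End Deg.

Section Gauss.
Variable R : realType.
Local Notation C := R[i].
Local Notation A := {poly C}.

Lemma divX (a : C) (f : {poly A}) : map_poly (horner_eval a) f = 0 ->
  exists f1 : {poly A}, f = ('X - a%:P)%:P * f1.
Proof.
move=> hf; exists (map_poly (fun x => x %/ ('X - a%:P)) f).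
apply/polyP => i; rewrite coefCM coef_map_id0 ?div0p // mulrC divpK //.
rewrite dvdp_XsubCl; apply/rootP.
by have := congr1 (fun g : {poly C} => g`_i) hf; rewrite coef_map coef0.
Qed.

Lemma gaussC (c : A) : c != 0 -> forall m f h : {poly A},
  c%:P * m = f * h -> exists (c1 c2 : A) (f' h' : {poly A}),
  [/\ f = c1%:P * f', h = c2%:P * h' & m = f' * h'].
Proof.
move: c; suff H : forall n (c : A), (size c <= n)%N -> c != 0 -> forall m f h : {poly A},
  c%:P * m = f * h -> exists (c1 c2 : A) (f' h' : {poly A}),
  [/\ f = c1%:P * f', h = c2%:P * h' & m = f' * h'].
  by move=> c; exact: H (leqnn _).
elim=> [|n IH] c hs cn0 m f h e.
  by move: cn0; rewrite -size_poly_eq0; case: (size c) hs.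
case: (boolP (size c == 1%N)) => [/size_poly1P [k kn0 hk]|hs1].
  have hu : c%:P \is a GRing.unit.
    by rewrite poly_unitE size_polyC cn0 coefC /= poly_unitE hk size_polyC kn0 coefC /= unitfE.
  exists 1, c, f, ((c%:P)^-1 * h); split.
  - by rewrite mul1r.
  - by rewrite mulrA divrr // mul1r.
  - by rewrite mulrCA -e mulKr.
have [a ra] : exists a, root c a by apply/closed_rootP.
have [c' hc'] := factor_theorem _ _ ra.
have c'n0 : c' != 0 by move: cn0; rewrite hc'; apply: contraNneq => ->; rewrite mul0r.
have hs' : (size c' <= n)%N.
  move: hs; rewrite hc' size_mul ?polyXsubC_eq0 // size_XsubC addn2 /=.
  by [].
have ha : map_poly (horner_eval a) f * map_poly (horner_eval a) h = 0.
  rewrite -rmorphM -e rmorphM /= map_polyC /= /horner_eval.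
  by rewrite (rootP ra) mul0r.
have Xn0 : ('X - a%:P)%:P != 0 :> {poly A} by rewrite polyC_eq0 polyXsubC_eq0.
move/eqP: ha; rewrite mulf_eq0 => /orP[/eqP hf|/eqP hh].
  have [f1 ef] := divX hf.
  have e' : c'%:P * m = f1 * h.
    apply: (mulfI Xn0); rewrite mulrA -polyCM [_ * c']mulrC -hc' e ef; ring.
  have [c1 [c2 [f' [h' [e1 e2 e3]]]]] := IH _ hs' c'n0 _ _ _ e'.
  exists (('X - a%:P) * c1), c2, f', h'; split => //.
  by rewrite ef e1 polyCM mulrA.
have [h1 eh] := divX hh.
have e' : c'%:P * m = f * h1.
  apply: (mulfI Xn0); rewrite mulrA -polyCM [_ * c']mulrC -hc' e eh; ring.
have [c1 [c2 [f' [h' [e1 e2 e3]]]]] := IH _ hs' c'n0 _ _ _ e'.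
exists c1, (('X - a%:P) * c2), f', h'; split => //.
by rewrite eh e2 polyCM mulrA.
Qed.

End Gauss.

Section Ev.
Variable R : realType.
Local Notation C := R[i].
Local Notation A := {poly C}.

Definition ev (z : C) (f : {poly A}) : C := (map_poly (horner_eval z^*) f).[z].

Lemma evM z f g : ev z (f * g) = ev z f * ev z g.
Proof. by rewrite /ev rmorphM hornerM. Qed.
Lemma evD z f g : ev z (f + g) = ev z f + ev z g.
Proof. by rewrite /ev rmorphD hornerD. Qed.
Lemma evC z (c : A) : ev z c%:P = c.[z^*].
Proof. by rewrite /ev map_polyC hornerC. Qed.

Lemma ev_wide z (f : {poly A}) N : (size f <= N)%N ->
  (forall j, (size (f`_j)%R <= N)%N) ->
  ev z f = \sum_(j < N) \sum_(k < N) f`_j`_k * z ^+ j * z^* ^+ k.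
Proof.
move=> hN hj; rewrite /ev (horner_coef_wide _ (n:=N)); last first.
  apply/leq_sizeP => i hi; rewrite coef_map /=.
  by move/leq_sizeP: hN => ->; rewrite // /horner_eval horner0.
apply: eq_bigr => j _; rewrite coef_map /= /horner_eval (horner_coef_wide _ (hj j)).
rewrite mulr_suml; apply: eq_bigr => k _; ring.
Qed.

Lemma evalan_ev (p : polyan R) z : evalan p z = ev z p.
Proof.
rewrite /ev (horner_coef_wide _ (n:=size p)); last first.
  apply/leq_sizeP => i hi; rewrite coef_map /=.
  by move/leq_sizeP: (leqnn (size p)) => ->; rewrite // /horner_eval horner0.
rewrite /evalan; apply: eq_bigr => j _; rewrite coef_map /= /horner_eval horner_coef.
rewrite mulr_suml; apply: eq_bigr => k _; rewrite /coefan; ring.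
Qed.

Definition star (f : {poly A}) : {poly A} :=
  swapXY (map_poly (map_poly Num.conj_op) f).

Lemma coef_star f j k : (star f)`_j`_k = (f`_k`_j)^*.
Proof. by rewrite /star coef_swapXY !coef_map. Qed.

Lemma starM f g : star (f * g) = star f * star g.
Proof. by rewrite /star !rmorphM. Qed.

Lemma starK f : star (star f) = f.
Proof.
by apply/polyP => j; apply/polyP => k; rewrite !coef_star conjCK.
Qed.

Lemma ev_star z f : ev z (star f) = (ev z f)^*.
Proof.
pose N := (size f + sizeY f)%N.
have hb : forall j k, (N <= j)%N || (N <= k)%N -> f`_j`_k = 0.
  move=> j k /orP[h|h].
    by rewrite (nth_default _ (leq_trans (leq_addr _ _) h)) coef0.
  apply: nth_default; apply: leq_trans (max_size_coefXY f j) _.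
  by apply: leq_trans h; rewrite leq_addl.
have hw : forall g : {poly A}, (forall j k, (N <= j)%N || (N <= k)%N -> g`_j`_k = 0) ->
    ev z g = \sum_(j < N) \sum_(k < N) g`_j`_k * z ^+ j * z^* ^+ k.
  move=> g hg; apply: ev_wide.
    apply/leq_sizeP => j hj; apply/polyP => k; rewrite coef0; apply: hg.
    by rewrite hj.
  move=> j; apply/leq_sizeP => k hk; apply: hg; by rewrite hk orbT.
rewrite (hw _ hb) hw; last first.
  by move=> j k h; rewrite coef_star hb ?rmorph0 // orbC.
rewrite rmorph_sum /= exchange_big; apply: eq_bigr => j _.
rewrite rmorph_sum /=; apply: eq_bigr => k _.
by rewrite coef_star !rmorphM /= !rmorphXn /= conjCK mulrAC.
Qed.

End Ev.

Section Main.
Variable R : realType.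
Local Notation C := R[i].
Local Notation A := {poly C}.

Lemma final (p T : polyan R) j0 k0 : p != 0 -> star p = p * T ->
  `|p`_j0`_k0| != `|p`_k0`_j0| -> False.
Proof.
move=> pn0 eq hjk.
have eT : T * star T = 1.
  apply: (mulfI pn0); rewrite mulr1.
  by have := starK p; rewrite eq starM eq -mulrA.
have hu : T \is a GRing.unit by apply/unitrP; exists (star T); rewrite mulrC eT.
move: (hu); rewrite poly_unitE => /andP[/eqP s1 hu0].
move: hu0; rewrite poly_unitE => /andP[/eqP s2 _].
have eTc : T = (T`_0`_0)%:P%:P.
  by rewrite -(size1_polyC (eq_leq s2)) -(size1_polyC (eq_leq s1)).
set l := T`_0`_0 in eTc.
have hl : `|l| = 1.
  have h1 : l * l^* = 1.
    have := congr1 (fun g : polyan R => g`_0`_0) eT.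
    by rewrite /= {1}eTc !coefCM coef_star -/l coefC /= coefC.
  have : `|l| ^+ 2 = 1 by rewrite normCK h1.
  by move/eqP; rewrite sqrp_eq1 // => /eqP.
have := congr1 (fun g : polyan R => g`_k0`_j0) eq.
rewrite /= coef_star eTc !coefMC => h.
move: hjk; rewrite -norm_conjC h normrM hl mulr1 eqxx.
by [].
Qed.

End Main.

Lemma mk_inj (A : idomainType) : injective (map_poly (@FracField.tofrac A)).
Proof.
move=> a b e; apply/polyP => i.
by have := congr1 (fun g : {poly {fraction A}} => g`_i) e; rewrite /= !coef_map => /tofrac_inj.
Qed.

Lemma size_mk (A : idomainType) (f : {poly A}) :
  size (map_poly (@FracField.tofrac A) f) = size f.
Proof. rewrite size_map_inj_poly //; first exact: tofrac_inj. Qed.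

Lemma ring_aux (K : comRingType) (a b x y u v : K) :
  b * (a * x) * u + a * (b * y) * v = a * b * (x * u + y * v).
Proof. ring. Qed.

Lemma ring_aux2 (K : comNzRingType) (a b : K) (x y : {poly K}) :
  a%:P * b%:P * (x * y) = a%:P * y * (b%:P * x).
Proof. ring. Qed.

Unset Implicit Arguments. Set Strict Implicit.

Theorem theorem2p9 (R : realType) (p : polyan R) :
  irreducible_an p ->
  (exists j k : nat, `|coefan p j k| != `|coefan p k j|) ->
  exists s : seq R[i], forall z : R[i], evalan p z = 0 -> z \in s.
Proof.
move=> hirr [j0 [k0 hjk]].
have irr2 : forall a b : polyan R, p = a * b -> (1 <= degan a)%N -> (1 <= degan b)%N -> False.
  by move=> a b e h1 h2; apply: hirr; exists a, b.
have pn0 : p != 0.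
  by apply: contraNneq hjk => p0; rewrite /coefan p0 !coef0.
suff [r [rn0 hr]] : exists r : {poly R[i]}, r != 0 /\ forall z, ev z p = 0 -> r.[z^*] = 0.
  have [rs hrs] := closed_field_poly_normal r.
  exists (map Num.conj_op rs) => z; rewrite evalan_ev => hz.
  have := hr z hz; rewrite hrs hornerZ => /eqP; rewrite mulf_eq0 lead_coef_eq0 (negbTE rn0) /=.
  move=> h; have : root (\prod_(a <- rs) ('X - a%:P)) z^* by exact: h.
  rewrite root_prod_XsubC => hin; rewrite -(conjCK z); exact: map_f.
have [hs1|hs1] := leqP (size p) 1.
  exists p`_0; split.
    by apply: contraNneq pn0 => h0; rewrite (size1_polyC hs1) h0.
  by move=> z; rewrite {1}(size1_polyC hs1) evC.
pose q := star p.
have evq : forall z, ev z p = 0 -> ev z q = 0 by move=> z hz; rewrite ev_star hz rmorph0.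
pose mk := map_poly (@FracField.tofrac {poly R[i]}).
case: (boolP (coprimep (mk p) (mk q))) => [hcop|hncop].
  have [[u1 u2] /= hu] := Bezout_coprimepP _ _ hcop.
  have hs : size (u1 * mk p + u2 * mk q) = 1%N by rewrite (eqp_size hu) size_poly1.
  have [d1 [d1n0 [t1 ht1]]] := clear_den u1.
  have [d2 [d2n0 [t2 ht2]]] := clear_den u2.
  pose f := d2%:P * t1 * p + d1%:P * t2 * q.
  have hmf : mk f = ((d1 * d2)%:F)%:P * (u1 * mk p + u2 * mk q).
    rewrite /f /mk rmorphD !rmorphM /= !map_polyC /= ht1 ht2.
    exact: ring_aux.
  have sf : size f == 1%N.
    by rewrite -(size_mk f) -/mk hmf size_Cmul ?hs // tofrac_eq0 mulf_neq0.
  have [c cn0 fc] := size_poly1P _ sf.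
  exists c; split => // z hz.
  have : ev z f = 0 by rewrite /f !evD !evM hz (evq z hz) !mulr0 addr0.
  by rewrite fc evC.
have [G [hGs [[H eP] [S eQ]]]] : exists G : {poly {fraction {poly R[i]}}}, (1 < size G)%N /\
    ((exists H, mk p = H * G) /\ (exists S, mk q = S * G)).
  exists (gcdp (mk p) (mk q)); split; last first.
    split; [exists (mk p %/ gcdp (mk p) (mk q)) | exists (mk q %/ gcdp (mk p) (mk q))];
      by rewrite divpK ?dvdp_gcdl ?dvdp_gcdr.
  have Pn0 : mk p != 0 by rewrite -size_poly_eq0 size_mk size_poly_eq0.
  have Gn0 : gcdp (mk p) (mk q) != 0 by rewrite gcdp_eq0 negb_and Pn0.
  move: hncop; rewrite coprimep_def -size_poly_eq0 in Gn0 *.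
  by case: (size _) Gn0 => [|[|n]].
have [d1 [d1n0 [g hg]]] := clear_den G.
have [d2 [d2n0 [h hh]]] := clear_den H.
have [d3 [d3n0 [s hs]]] := clear_den S.
have e1 : (d1 * d2)%:P * p = g * h.
  apply: mk_inj; rewrite rmorphM /= map_polyC /= -/mk eP /mk !rmorphM /= hg hh.
  exact: ring_aux2.
have e2 : (d1 * d3)%:P * q = g * s.
  apply: mk_inj; rewrite rmorphM /= map_polyC /= -/mk eQ /mk !rmorphM /= hg hs.
  exact: ring_aux2.
have [c1 [c2 [g' [h' [eg eh ep]]]]] := gaussC (mulf_neq0 d1n0 d2n0) e1.
have sg : size g = size G.
  by rewrite -(size_mk g) hg size_Cmul // tofrac_eq0.
have c1n0 : c1 != 0.
  apply: contraTneq hGs => c10; rewrite -sg eg c10 mul0r size_poly0. by [].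
have sg' : (1 < size g')%N by rewrite -(size_Cmul _ c1n0) -eg sg.
have dh' : degan h' = 0%N.
  case: (posnP (degan h')) => // hpos.
  by exfalso; apply: (irr2 _ _ ep (degan_pos sg') hpos).
set e := h'`_0`_0.
have eh' := degan0 dh'; rewrite -/e in eh'.
have en0 : e != 0 by apply: contraNneq pn0 => e0; rewrite ep eh' e0 mulr0.
have eg' : g' = p * (e^-1)%:P%:P.
  by rewrite ep eh' -mulrA -!polyCM mulfV // mulr1.
have e3 : (d1 * d3)%:P * q = p * (c1%:P * (e^-1)%:P%:P * s).
  by rewrite e2 eg eg'; ring.
have [k1 [k2 [p'' [t'' [ep1 et ep2]]]]] := gaussC (mulf_neq0 d1n0 d3n0) e3.
have k1n0 : k1 != 0 by apply: contraNneq pn0 => kk0; rewrite ep1 kk0 mul0r.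
have sp'' : size p'' = size p by rewrite ep1 size_Cmul.
have [k1s|k1s] := leqP (size k1) 1; last first.
  by exfalso; apply: (irr2 _ _ ep1 (degan_posC k1s)); apply: degan_pos; rewrite sp''.
set k := k1`_0.
have ek : k1 = k%:P := size1_polyC k1s.
have kn0 : k != 0 by apply: contraNneq k1n0 => kk0; rewrite ek kk0.
exfalso; apply: (final (T := (k^-1)%:P%:P * t'') pn0 _ hjk).
rewrite -/q ep2 mulrA; congr (_ * _).
by rewrite ep1 ek mulrC mulrA -!polyCM mulVf // mul1r.
Qed.
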